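(* Let $x\ge 0$ and $y$ be integers with $M(x,y)\neq\emptyset$, and let $G_0$ be a minimal graph in $M(x,y)$. Then (a) $\alpha(G_0)<3$ (so $G_0$ is a $(\mathrm{cl}(G_0)+1,3)$-graph); (b) $|V(G_0)|\le 2\chi(G_0)-1$; (c) $|V(G_0)|\ge 4f(G_0)-2x-1$.
   Context: All graphs are finite, simple and undirected; the empty graph is allowed, with $\chi=\mathrm{cl}=0$. $\mathrm{cl}(G)$ is the clique number, $\alpha(G)$ the independence number, $\chi(G)$ the chromatic number, and $f(G)=\chi(G)-\mathrm{cl}(G)$. A $(p,q)$-graph is a graph $G$ with $\mathrm{cl}(G)<p$ and $\alpha(G)<q$. For integers $x,y$, $M(x,y)=\{G: |V(G)|<\chi(G)+2f(G)-x \text{ and } f(G)\le y\}$. A graph $G_0$ in a nonempty set $\mathcal M$ of graphs is minimal in $\mathcal M$ if $|V(G_0)|=\min\{|V(G)|:G\in\mathcal M\}$. *)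

(* Defs.v *)
From HB Require Import structures.
From mathcomp Require Import all_boot all_order all_algebra.
Set Implicit Arguments. Unset Strict Implicit. Unset Printing Implicit Defensive.
Import Order.TTheory GRing.Theory Num.Theory.

Definition simple_graph (T : finType) (e : rel T) : Prop :=
  symmetric e /\ irreflexive e.

Definition is_clique (T : finType) (e : rel T) (A : {set T}) : bool :=
  [forall u in A, forall v in A, (u != v) ==> e u v].

Definition is_stable (T : finType) (e : rel T) (A : {set T}) : bool :=
  [forall u in A, forall v in A, ~~ e u v].

Definition cl (T : finType) (e : rel T) : nat :=
  \max_(A : {set T} | is_clique e A) #|A|.

Definition alpha (T : finType) (e : rel T) : nat :=
  \max_(A : {set T} | is_stable e A) #|A|.

Definition colorable (T : finType) (e : rel T) (k : nat) : bool :=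
  [exists c : {ffun T -> 'I_k}, [forall u, forall v, e u v ==> (c u != c v)]].

(* chromatic number: least k with a proper k-colouring
   (such a k <= #|T| always exists). *)
Definition chi (T : finType) (e : rel T) : nat :=
  find (colorable e) (iota 0 #|T|.+1).

Definition fG (T : finType) (e : rel T) : int := (chi e)%:Z - (cl e)%:Z.

Definition pq_graph (T : finType) (e : rel T) (p q : nat) : bool :=
  (cl e < p)%N && (alpha e < q)%N.

Definition inM (x y : int) (T : finType) (e : rel T) : Prop :=
  simple_graph e /\
  ((#|T|%:Z < (chi e)%:Z + 2 * fG e - x)%R /\ (fG e <= y)%R).

Definition minimal_in_M (x y : int) (T : finType) (e : rel T) : Prop :=
  inM x y e /\
  forall (T' : finType) (e' : rel T'), inM x y e' -> (#|T| <= #|T'|)%N.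

(* Main.v *)
Require Import Defs.
From HB Require Import structures.
From mathcomp Require Import all_boot all_order all_algebra.
From Stdlib Require Import Lia.
Import Order.TTheory GRing.Theory Num.Theory.
Set Implicit Arguments. Unset Strict Implicit. Unset Printing Implicit Defensive.

Ltac nlia :=
  repeat match goal with
  | H : is_true (_ <= _)%N |- _ => move/ssrnat.leP: H => H
  | H : is_true (_ < _)%N |- _ => move/ssrnat.ltP: H => H
  | H : is_true (_ == _)%N |- _ => move/eqP: H => H
  | H : is_true (~~ (_ <= _)%N) |- _ => rewrite -ltnNge in H
  | H : is_true (~~ (_ < _)%N) |- _ => rewrite -leqNgt in H
  end;
  try (apply/ssrnat.leP); try (apply/ssrnat.ltP); try (apply/eqP);
  repeat match goal with H : context [addn] |- _ => rewrite -plusE in H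
   | H : context [muln] |- _ => rewrite -multE in H
   | H : context [subn] |- _ => rewrite -minusE in H end;
  rewrite -?plusE -?multE -?minusE; lia.

Lemma find_iota_min (P : pred nat) N : P N ->
  P (find P (iota 0 N.+1)) /\ (forall j, P j -> find P (iota 0 N.+1) <= j).
Proof.
move=> PN.
have hP : has P (iota 0 N.+1) by apply/hasP; exists N; rewrite ?mem_iota ?add0n ?leq0n ?ltnSn.
have flt : find P (iota 0 N.+1) < N.+1 by rewrite -{2}(size_iota 0 N.+1) -has_find.
split; first by have := nth_find 0 hP; rewrite nth_iota // add0n.
move=> j Pj; rewrite leqNgt; apply/negP=> jlt.
have := before_find 0 jlt; rewrite nth_iota ?add0n ?Pj //.
exact: ltn_trans jlt flt.
Qed.

Definition colA (T : finType) (e : rel T) (A : {set T}) (k : nat) : bool :=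
  [exists c : {ffun T -> 'I_k.+1}, [forall u in A, (c u < k)%N] &&
     [forall u in A, forall v in A, e u v ==> (c u != c v)]].

Lemma colAP (T : finType) (e : rel T) (A : {set T}) (k : nat) :
  reflect (exists c : T -> nat, (forall u, u \in A -> c u < k) /\
     (forall u v, u \in A -> v \in A -> e u v -> c u <> c v)) (colA e A k).
Proof.
apply: (iffP existsP) => [[c /andP[/forallP H1 /forallP H2]]|[c [H1 H2]]].
- exists (fun u => nat_of_ord (c u)); split => [u uA|u v uA vA euv].
    by have /implyP := H1 u; apply.
  have /implyP/(_ uA)/forallP/(_ v)/implyP/(_ vA)/implyP/(_ euv)/eqP ne := H2 u.
  by move=> eq; apply: ne; apply: val_inj.
- exists [ffun u => inord (c u)]; apply/andP; split.
    apply/forallP=> u; apply/implyP=> uA; rewrite ffunE inordK ?H1 //.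
    by rewrite ltnS ltnW ?H1.
  apply/forallP=> u; apply/implyP=> uA; apply/forallP=> v; apply/implyP=> vA.
  apply/implyP=> euv; rewrite !ffunE; apply/eqP=> /(congr1 val).
  rewrite /= !inordK; first exact: H2.
    by rewrite ltnS ltnW ?H1.
  by rewrite ltnS ltnW ?H1.
Qed.

Lemma colorableP (T : finType) (e : rel T) (k : nat) :
  reflect (exists c : T -> nat, (forall u, c u < k) /\
     (forall u v, e u v -> c u <> c v)) (colorable e k).
Proof.
apply: (iffP existsP) => [[c /forallP H]|[c [H1 H2]]].
- exists (fun u => nat_of_ord (c u)); split => [u|u v euv] //.
  have /forallP/(_ v)/implyP/(_ euv)/eqP ne := H u.
  by move=> eq; apply: ne; apply: val_inj.
- exists [ffun u => Ordinal (H1 u)]; apply/forallP=> u; apply/forallP=> v.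
  apply/implyP=> euv; rewrite !ffunE; apply/eqP=> /(congr1 val) /=; exact: H2.
Qed.

Definition chiA (T : finType) (e : rel T) (A : {set T}) : nat :=
  find (colA e A) (iota 0 #|T|.+1).

Lemma colA_card (T : finType) (e : rel T) (A : {set T}) :
  irreflexive e -> colA e A #|T|.
Proof.
move=> irr; apply/colAP; exists (fun u => nat_of_ord (enum_rank u)); split.
  by move=> u _; apply: ltn_ord.
move=> u v _ _ euv /val_inj/enum_rank_inj uv; by rewrite uv irr in euv.
Qed.

Lemma chiA_spec (T : finType) (e : rel T) (A : {set T}) : irreflexive e ->
  colA e A (chiA e A) /\ (forall j, colA e A j -> chiA e A <= j).
Proof. by move=> irr; exact: (@find_iota_min (colA e A) #|T| (@colA_card T e A irr)). Qed.

Lemma colorable_card (T : finType) (e : rel T) :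
  irreflexive e -> colorable e #|T|.
Proof.
move=> irr; apply/colorableP; exists (fun u => nat_of_ord (enum_rank u)); split.
  by move=> u; apply: ltn_ord.
move=> u v euv /val_inj/enum_rank_inj uv; by rewrite uv irr in euv.
Qed.

Lemma chi_spec (T : finType) (e : rel T) : irreflexive e ->
  colorable e (chi e) /\ (forall j, colorable e j -> chi e <= j).
Proof. by move=> irr; exact: (@find_iota_min (colorable e) #|T| (@colorable_card T e irr)). Qed.

Lemma colorable_colA (T T' : finType) (e : rel T) (e' : rel T') (h : T' -> T)
  (A : {set T}) : injective h -> (forall u v, e' u v = e (h u) (h v)) ->
  (forall u, h u \in A) -> (forall x, x \in A -> exists u, h u = x) ->
  forall k, colorable e' k = colA e A k.
Proof.
move=> hinj he hA hA' k; apply/idP/idP.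
- case/colorableP => c [H1 H2]; apply/colAP.
  exists (fun x => if [pick u | h u == x] is Some u then c u else 0).
  have key : forall u, (if [pick u0 | h u0 == h u] is Some u0 then c u0 else 0) = c u.
    move=> u; case: pickP => [u0 /eqP/hinj -> // | /(_ u)]; by rewrite eqxx.
  split => [z /hA' [u <-] | z w /hA' [u <-] /hA' [v <-]]; rewrite !key //.
  by rewrite -he; apply: H2.
- case/colAP => c [H1 H2]; apply/colorableP.
  exists (fun u => c (h u)); split => [u|u v]; first exact: H1.
  rewrite he; exact: H2.
Qed.

Lemma chi_bridge (T T' : finType) (e : rel T) (e' : rel T') (h : T' -> T)
  (A : {set T}) : irreflexive e -> injective h -> (forall u v, e' u v = e (h u) (h v)) ->
  (forall u, h u \in A) -> (forall x, x \in A -> exists u, h u = x) ->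
  chi e' = chiA e A.
Proof.
move=> irr hinj he hA hA'.
have irr' : irreflexive e' by move=> u; rewrite he irr.
have eq := colorable_colA hinj he hA hA'.
have [c1 m1] := chi_spec irr'; have [c2 m2] := chiA_spec A irr.
apply/eqP; rewrite eqn_leq m1 ?eq // m2 // -eq //.
Qed.

Definition clA (T : finType) (e : rel T) (A : {set T}) : nat :=
  \max_(B : {set T} | (B \subset A) && is_clique e B) #|B|.

Lemma cliqueP (T : finType) (e : rel T) (B : {set T}) :
  reflect (forall u v, u \in B -> v \in B -> u != v -> e u v) (is_clique e B).
Proof.
apply: (iffP forallP) => [H u v uB vB uv|H u].
  by have /implyP/(_ uB)/forallP/(_ v)/implyP/(_ vB)/implyP/(_ uv) := H u.
apply/implyP=> uB; apply/forallP=> v; apply/implyP=> vB; apply/implyP; exact: H.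
Qed.

Lemma stableP (T : finType) (e : rel T) (B : {set T}) :
  reflect (forall u v, u \in B -> v \in B -> ~~ e u v) (is_stable e B).
Proof.
apply: (iffP forallP) => [H u v uB vB|H u].
  by have /implyP/(_ uB)/forallP/(_ v)/implyP/(_ vB) := H u.
apply/implyP=> uB; apply/forallP=> v; apply/implyP=> vB; exact: H.
Qed.

Lemma max_spec (I : finType) (P : pred I) (F : I -> nat) (i0 : I) : P i0 ->
  (exists i, P i /\ F i = \max_(j | P j) F j) /\ (forall i, P i -> F i <= \max_(j | P j) F j).
Proof.
move=> Pi0; split; last by move=> i Pi; apply: leq_bigmax_cond.
have : 0 < #|P| by apply/card_gt0P; exists i0.
by case/(eq_bigmax_cond F) => i Pi ->; exists i.
Qed.

Lemma clA_spec (T : finType) (e : rel T) (A : {set T}) :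
  (exists B : {set T}, [/\ B \subset A, is_clique e B & #|B| = clA e A]) /\
  (forall B : {set T}, B \subset A -> is_clique e B -> #|B| <= clA e A).
Proof.
have P0 : (set0 \subset A) && is_clique e set0.
  by rewrite sub0set; apply/cliqueP => u v; rewrite inE.
have [[B [/andP[BA cB] eB]] H] :=
  @max_spec _ (fun B : {set T} => (B \subset A) && is_clique e B) (fun B : {set T} => #|B|) _ P0.
split; first by exists B.
by move=> C CA cC; apply: H; rewrite CA.
Qed.

Lemma cl_clA (T : finType) (e : rel T) : cl e = clA e setT.
Proof. by rewrite /cl /clA; apply: eq_bigl => B; rewrite subsetT. Qed.

Lemma cl_bridge (T T' : finType) (e : rel T) (e' : rel T') (h : T' -> T)
  (A : {set T}) : injective h -> (forall u v, e' u v = e (h u) (h v)) ->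
  (forall u, h u \in A) -> (forall x, x \in A -> exists u, h u = x) ->
  cl e' = clA e A.
Proof.
move=> hinj he hA hA'; rewrite cl_clA.
have [[B' [_ cB' eB']] H'] := clA_spec e' setT.
have [[B [BA cB eB]] H] := clA_spec e A.
move/cliqueP: cB' => cB'; move/cliqueP: cB => cB.
apply/eqP; rewrite eqn_leq; apply/andP; split.
- rewrite -eB' -(card_imset _ hinj); apply: H.
    by apply/subsetP=> z /imsetP [u _ ->].
  apply/cliqueP=> z w /imsetP [u uB ->] /imsetP [v vB ->] ne.
  rewrite -he; apply: cB' => //; apply: contra ne => /eqP -> //.
- have BE : B = h @: (h @^-1: B).
    apply/setP=> z; apply/idP/idP => [zB|/imsetP [u]]; last by rewrite inE => ? ->.
    have [u hu] := hA' z (subsetP BA z zB); apply/imsetP; exists u => //.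
    by rewrite inE hu.
  rewrite -eB BE (card_imset _ hinj); apply: H'; first exact: subsetT.
  apply/cliqueP=> u v; rewrite !inE he => uB vB ne.
  apply: cB => //; apply: contra ne => /eqP /hinj -> //.
Qed.


Lemma chiA_sub (T : finType) (e : rel T) (A B : {set T}) :
  irreflexive e -> A \subset B -> chiA e A <= chiA e B.
Proof.
move=> irr AB; have [cB _] := chiA_spec B irr; have [_ mA] := chiA_spec A irr.
apply: mA; move/colAP: cB => [c [H1 H2]]; apply/colAP; exists c.
split => [u uA|u v uA vA]; [apply: H1 | apply: H2]; by apply: (subsetP AB).
Qed.

Lemma chiA_stable (T : finType) (e : rel T) (A S : {set T}) :
  irreflexive e -> is_stable e S -> chiA e A <= (chiA e (A :\: S)).+1.
Proof.
move=> irr /stableP st; have [cB _] := chiA_spec (A :\: S) irr.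
have [_ mA] := chiA_spec A irr.
apply: mA; move/colAP: cB => [c [H1 H2]]; apply/colAP.
set k := chiA e (A :\: S).
exists (fun x => if x \in S then k else c x); split.
  move=> u uA; case: ifP => uS //; apply: ltnW; rewrite ltnS; apply: H1.
  by rewrite inE uS.
move=> u v uA vA euv; case: ifP => uS; case: ifP => vS.
- by have := st u v uS vS; rewrite euv.
- move=> kc; have := H1 v; rewrite inE vS vA -kc ltnn => /(_ isT) //.
- move=> kc; have := H1 u; rewrite inE uS uA kc ltnn => /(_ isT) //.
- by apply: H2 => //; rewrite inE ?uS ?vS ?uA ?vA.
Qed.

Lemma clA_sub (T : finType) (e : rel T) (A B : {set T}) :
  A \subset B -> clA e A <= clA e B.
Proof.
move=> AB; have [[Q [QA cQ <-]] _] := clA_spec e A.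
have [_ H] := clA_spec e B; apply: H => //; exact: subset_trans QA AB.
Qed.

Lemma clA_stable (T : finType) (e : rel T) (A S : {set T}) :
  is_stable e S -> clA e A <= (clA e (A :\: S)).+1.
Proof.
move=> /stableP st; have [[Q [QA cQ <-]] _] := clA_spec e A.
have [_ H] := clA_spec e (A :\: S).
have h1 : #|Q :\: S| <= clA e (A :\: S).
  apply: H; first by apply: setSD.
  move/cliqueP: cQ => cQ; apply/cliqueP=> u v; rewrite !inE => /andP[_ uQ] /andP[_ vQ].
  exact: cQ.
have h2 : #|Q :&: S| <= 1.
  rewrite leqNgt; apply/negP => /card_gt1P [u [v [uQS vQS ne]]].
  move: uQS vQS; rewrite !inE => /andP[uQ uS] /andP[vQ vS].
  by move/cliqueP: cQ => /(_ u v uQ vQ ne); have := st u v uS vS => /negbTE ->.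
rewrite -(cardsID S Q); nlia.
Qed.

Lemma clA_le_chiA (T : finType) (e : rel T) (A : {set T}) :
  irreflexive e -> clA e A <= chiA e A.
Proof.
move=> irr; have [[Q [QA cQ <-]] _] := clA_spec e A.
have [cA _] := chiA_spec A irr; set k := chiA e A in cA *.
case/existsP: cA => c /andP[/forallP H1 /forallP H2].
have inj : {in Q &, injective c}.
  move=> u v uQ vQ cuv; apply/eqP; apply/negP => /negP ne.
  move/cliqueP: cQ => /(_ u v uQ vQ ne) euv.
  have /implyP/(_ (subsetP QA u uQ))/forallP/(_ v)/implyP/(_ (subsetP QA v vQ)) := H2 u.
  by rewrite euv cuv eqxx.
rewrite -(card_in_imset inj).
have sub : c @: Q \subset [set~ ord_max].
  apply/subsetP=> z /imsetP [u uQ ->]; rewrite !inE.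
  have /implyP/(_ (subsetP QA u uQ)) := H1 u.
  by apply: contraTneq => ->; rewrite /= ltnn.
by have := subset_leq_card sub; rewrite cardsC1 card_ord.
Qed.

Lemma chiA_set0 (T : finType) (e : rel T) : irreflexive e -> chiA e set0 = 0.
Proof.
move=> irr; have [_ m] := chiA_spec (set0 : {set T}) irr.
apply/eqP; rewrite -leqn0; apply: m; apply/colAP; exists (fun _ => 0).
by split => [u|u v]; rewrite inE.
Qed.

Lemma card_le_2chi (T : finType) (e : rel T) (A : {set T}) : irreflexive e ->
  (forall S : {set T}, S \subset A -> is_stable e S -> #|S| <= 2) ->
  #|A| <= 2 * chiA e A.
Proof.
move=> irr st2; have [cA _] := chiA_spec A irr; set k := chiA e A in cA *.
case/existsP: cA => c /andP[/forallP H1 /forallP H2].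
rewrite -sum1_card (partition_big (fun x => c x) xpredT) //= big_ord_recr /=.
rewrite [X in _ + X]big1 ?addn0; last first.
  move=> x /andP[xA /eqP cx]; have /implyP/(_ xA) := H1 x.
  by rewrite cx /= ltnn.
have -> : 2 * k = \sum_(i < k) 2 by rewrite big_const_ord iter_addn_0 mulnC.
apply: leq_sum => i _.
rewrite (eq_bigl (fun x => x \in [set x in A | c x == widen_ord (leqnSn k) i])); last first.
  by move=> x; rewrite !inE.
rewrite sum1_card; apply: st2; first by apply/subsetP=> x; rewrite inE => /andP[].
apply/stableP=> u v; rewrite !inE => /andP[uA /eqP cu] /andP[vA /eqP cv].
have /implyP/(_ uA)/forallP/(_ v)/implyP/(_ vA) := H2 u.
by rewrite cu cv eqxx implybF.
Qed.


Lemma one_int : (1 : int) = Posz 1. Proof. by []. Qed.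

Lemma ineqM (n c w xn : nat) : (w <= c)%N ->
  (n%:Z < c%:Z + 2 * (c%:Z - w%:Z) - xn%:Z)%R = (n + xn + 2*w < 3*c)%N.
Proof.
move=> wc; rewrite subzn // ltrBrDr natz -PoszM -PoszD -PoszD ltz_nat.
apply/idP/idP => h; nlia.
Qed.

Lemma ineqF (c w yn : nat) : (w <= c)%N ->
  ((c%:Z - w%:Z) <= yn%:Z)%R = (c <= w + yn)%N.
Proof. by move=> wc; rewrite subzn // lez_nat leq_subLR. Qed.

Lemma ineqB (n c : nat) : (n%:Z <= 2 * c%:Z - 1)%R = (n + 1 <= 2 * c)%N.
Proof. by rewrite lerBrDr natz -PoszM one_int -PoszD lez_nat. Qed.

Lemma ineqC (n c w xn : nat) : (w <= c)%N ->
  (4 * (c%:Z - w%:Z) - 2 * xn%:Z - 1 <= n%:Z)%R = (4 * c <= n + 2*xn + 1 + 4 * w)%N.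
Proof.
move=> wc; rewrite subzn // !lerBlDr !natz -!PoszM one_int -!PoszD lez_nat.
apply/idP/idP => h; nlia.
Qed.

Lemma stable1 (T : finType) (e : rel T) (v : T) : irreflexive e -> is_stable e [set v].
Proof. by move=> irr; apply/stableP => u w; rewrite !inE => /eqP-> /eqP->; rewrite irr. Qed.

Lemma reduce (T : finType) (e : rel T) : irreflexive e -> forall n (A : {set T}),
  #|A| <= n -> forall t, clA e A + t < chiA e A ->
  exists B : {set T}, [/\ B \subset A, chiA e B = clA e B + t &
                         chiA e A + #|B| <= chiA e B + #|A|].
Proof.
move=> irr; elim=> [|n IH] A hA t ht.
  have A0 : A = set0 by apply/eqP; rewrite -cards_eq0 -leqn0.
  by move: ht; rewrite A0 chiA_set0.
case: (set_0Vmem A) => [A0|[v vA]].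
  by move: ht; rewrite A0 chiA_set0.
have c1 := @chiA_stable T e A [set v] irr (stable1 v irr).
have c2 : chiA e (A :\ v) <= chiA e A by apply: chiA_sub => //; apply: subD1set.
have w2 : clA e (A :\ v) <= clA e A by apply: clA_sub; apply: subD1set.
have cd := cardsD1 v A; rewrite vA /= in cd.
case: (ltnP (clA e (A :\ v) + t) (chiA e (A :\ v))) => h.
  have hA' : #|A :\ v| <= n by nlia.
  have [B [BA eB cB]] := IH _ hA' t h.
  exists B; split => //; first exact: subset_trans BA (subD1set A v).
  nlia.
exists (A :\ v); split => //; first exact: subD1set.
  apply/eqP; rewrite eqn_leq h /=. change (A :\ v) with (A :\: [set v]) in c1. nlia.
change (A :\ v) with (A :\: [set v]) in c1. nlia.
Qed.

Lemma sub_graph (T : finType) (e : rel T) (A : {set T}) : simple_graph e ->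
  exists (T' : finType) (e' : rel T'),
    [/\ simple_graph e', #|T'| = #|A|, chi e' = chiA e A & cl e' = clA e A].
Proof.
move=> [sym irr].
pose T' := {x : T | x \in A}.
pose e' := [rel u v : T' | e (val u) (val v)].
have hA' : forall x, x \in A -> exists u : T', val u = x.
  by move=> x xA; exists (exist _ x xA).
exists T', e'; split.
- by split => [u v|u]; rewrite /e' /= ?irr // sym.
- by rewrite card_sig; apply: eq_card.
- by apply: (chi_bridge irr val_inj) => // u; apply: valP.
- by apply: (cl_bridge val_inj) => // u; apply: valP.
Qed.

Set Implicit Arguments.
Unset Implicit Arguments.

Theorem lemma3p2 (x y : int) (T : finType) (e : rel T) :
  (0 <= x)%R ->
  (exists (T' : finType) (e' : rel T'), inM x y e') ->
  minimal_in_M x y e ->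
  [/\ (alpha e < 3)%N /\ pq_graph e (cl e).+1 3,
      (#|T|%:Z <= 2 * (chi e)%:Z - 1)%R
    & (4 * fG e - 2 * x - 1 <= #|T|%:Z)%R].
Proof.
move=> x0 _ [[[sym irr] [Hg Hf]] Hmin].
have chiE : chi e = chiA e setT.
  exact: (@chi_bridge T T e e id setT irr (@inj_id T) (fun u v => erefl) (fun u => in_setT u) (fun u _ => ex_intro _ u erefl)).
have clE : cl e = clA e setT.
  exact: (@cl_bridge T T e e id setT (@inj_id T) (fun u v => erefl) (fun u => in_setT u) (fun u _ => ex_intro _ u erefl)).
have wc : (clA e setT <= chiA e setT)%N := clA_le_chiA setT irr.
rewrite /fG chiE clE in Hg Hf *.
move: x0 Hg Hmin; case: x => [xn|xn] // _ Hg Hmin.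
rewrite ineqM // in Hg.
rewrite subzn // in Hf; move: Hf Hmin; case: y => [yn|yn] // Hf Hmin.
rewrite lez_nat leq_subLR in Hf.
have core : forall A : {set T}, (#|A| < #|T|)%N ->
    (#|A| + xn + 2 * clA e A < 3 * chiA e A)%N ->
    ((chiA e setT) + #|A| <= chiA e A + #|T|)%N -> False.
  move=> A ltA gA cA.
  have [B [lB gB fB]] : exists B : {set T}, [/\ (#|B| < #|T|)%N,
      (#|B| + xn + 2 * clA e B < 3 * chiA e B)%N & (chiA e B <= clA e B + yn)%N].
    case: (leqP (chiA e A) (clA e A + yn)) => h; first by exists A.
    have [B [BA eB cB]] := reduce irr (leqnn #|A|) h.
    exists B; have := subset_leq_card BA; have := clA_le_chiA B irr.
    move=> h1 h2; split; nlia.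
  have [T' [e' [sg' cT' chiE' clE']]] := sub_graph B (conj sym irr).
  have hin : inM xn yn e'.
    split => //; rewrite /fG chiE' clE' ineqM ?clA_le_chiA // ineqF ?clA_le_chiA //.
    by rewrite cT'; split.
  have := Hmin T' e' hin; rewrite cT' => hh; nlia.
have rem : forall S : {set T}, is_stable e S -> (0 < #|S|)%N ->
    (#|T| - #|S| + xn + 2 * (clA e setT) < 3 * chiA e (setT :\: S))%N -> False.
  move=> S stS S0 h.
  have c1 := @chiA_stable T e setT S irr stS.
  have w1 : (clA e (setT :\: S) <= (clA e setT))%N by apply: clA_sub; apply: subsetT.
  have cd : (#|setT :\: S| + #|S| = #|T|)%N by rewrite setTD addnC cardsC.
  apply: (core (setT :\: S)); nlia.
have alpha2 : (alpha e < 3)%N.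
  rewrite ltnNge; apply/negP => a3.
  have P0 : is_stable e set0 by apply/stableP => u v; rewrite inE.
  have [[S [stS eS]] _] := @max_spec _ (fun S : {set T} => is_stable e S) (fun S => #|S|) _ P0.
  rewrite /alpha -eS in a3.
  have c1 := @chiA_stable T e setT S irr stS.
  have Sle : (#|S| <= #|T|)%N by rewrite -cardsT; apply: subset_leq_card; apply: subsetT.
  apply: (rem S stS); nlia.
have st2 : forall S : {set T}, is_stable e S -> (#|S| <= 2)%N.
  move=> S stS; have h : (#|S| <= alpha e)%N.
    exact: (@leq_bigmax_cond _ (fun S : {set T} => is_stable e S) (fun S => #|S|) S stS).
  nlia.
have gx : (3 * (chiA e setT) <= #|T| + xn + 2 * (clA e setT) + 1)%N.
  rewrite leqNgt; apply/negP => g2.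
  case: (boolP (is_clique e setT)) => [cT|].
    have [_ H] := clA_spec e setT; have := H setT (subxx _) cT.
    have [cc m] := chiA_spec setT irr; have := m _ (colA_card setT irr).
    rewrite cardsT => h1 h2; nlia.
  rewrite /is_clique negb_forall => /existsP [u]; rewrite negb_imply in_setT /=.
  rewrite negb_forall => /existsP [v]; rewrite negb_imply in_setT negb_imply /=.
  move=> /andP [uv euv].
  have stS : is_stable e [set u; v].
    apply/stableP => a b; rewrite !inE => /orP[] /eqP -> /orP[] /eqP ->;
      first [by rewrite irr | by [] | by rewrite sym].
  have cS : #|[set u; v]| = 2 by rewrite cards2 uv.
  have c1 := @chiA_stable T e setT [set u; v] irr stS.
  have Sle : (#|[set u; v]| <= #|T|)%N by rewrite -cardsT; apply: subset_leq_card; apply: subsetT.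
  apply: (rem _ stS); rewrite cS // in Sle *; nlia.
have n2 : (#|T| <= 2 * (chiA e setT))%N.
  rewrite -cardsT; apply: card_le_2chi irr _ => S _; exact: st2.
have nb : (#|T| + 1 <= 2 * (chiA e setT))%N.
  rewrite leqNgt; apply/negP => h.
  have : (0 < #|T|)%N by nlia.
  rewrite -cardsT => /card_gt0P [v _].
  have cd : (#|setT :\: [set v]| + 1 = #|T|)%N by rewrite setTD addnC -(cards1 v) cardsC.
  have cA : (#|setT :\: [set v]| <= 2 * chiA e (setT :\: [set v]))%N.
    apply: card_le_2chi irr _ => S _; exact: st2.
  apply: (rem [set v] (stable1 v irr)); rewrite cards1 //; nlia.
split.
- by split => //; rewrite /pq_graph clE alpha2 andbT ltnSn.
- by rewrite ineqB.
- by rewrite ineqC //; nlia.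
Qed.
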